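(* Let $\mathcal{A}$ be an $\ell_A$-quasi-cyclic code over $\mathbb{F}_q$ of length $n_A=\ell_A m_A$ and $\mathcal{B}$ an $\ell_B$-quasi-cyclic code over $\mathbb{F}_q$ of length $n_B=\ell_B m_B$, with $\gcd(n_A,n_B)=1$, and let integers $a,b$ satisfy $a n_A+b n_B=1$. Put $\ell=\ell_A\ell_B$, $m=m_Am_B$, $n=n_An_B$. Let $(m_{i,j})_{0\le i<n_B,\,0\le j<n_A}$ be an $n_B\times n_A$ matrix over $\mathbb{F}_q$ each of whose rows is in $\mathcal{A}$ and each of whose columns is in $\mathcal{B}$, and let $$c(X)\equiv\sum_{i=0}^{n_B-1}\sum_{j=0}^{n_A-1}m_{i,j}X^{\psi(i,j)}\pmod{X^n-1},\qquad \psi(i,j)=i a n_A\ell_A+j b n_B\ell_B \bmod n.$$ For $g\in\{0,\dots,\ell_B-1\}$, $h\in\{0,\dots,\ell_A-1\}$ define $$c_{g,h}(X)\equiv X^{\theta(g,h)}\sum_{i=0}^{m_B-1}\sum_{j=0}^{m_A-1}m_{i\ell_B+g,\,j\ell_A+h}X^{\chi(i,j)}\pmod{X^m-1},$$ where $\theta(g,h)=g(-b m_B)+h(-a m_A)\bmod m$ and $\chi(i,j)=i a n_A+j b n_B\bmod m$. Then $$c(X)\equiv\sum_{g=0}^{\ell_B-1}\sum_{h=0}^{\ell_A-1}c_{g,h}(X^{\ell_A\ell_B})X^{g\ell_A+h\ell_B}\pmod{X^n-1}.$$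
   Context: An $\ell$-quasi-cyclic code of length $\ell m$ over $\mathbb{F}_q$ is a linear code closed under cyclic shift of coordinates by $\ell$ positions. Exponents of $X$ are taken modulo the indicated modulus (so $X^{k}$ for negative $k$ means $X^{k\bmod m}$ modulo $X^m-1$, resp. modulo $n$ for $X^n-1$). *)

(* Defs.v *)
From HB Require Import structures.
From mathcomp Require Import all_boot all_order all_algebra.
Set Implicit Arguments. Unset Strict Implicit. Unset Printing Implicit Defensive.
Import GRing.Theory.
Local Open Scope ring_scope.

Definition rv_at (R : nzRingType) (n : nat) (c : 'rV[R]_n) (i : nat) : R :=
  if insub i is Some i' then c 0 i' else 0.

Definition mx_at (R : nzRingType) (r s : nat) (M : 'M[R]_(r, s)) (i j : nat) : R :=
  match insub i, insub j with
  | Some i', Some j' => M i' j'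
  | _, _ => 0
  end.

(* Cyclic shift of the coordinates of c (length n) by l positions:
   (qshift l c)_k = c_{k - l mod n}. *)
Definition qshift (R : nzRingType) (n : nat) (l : nat) (c : 'rV[R]_n) : 'rV[R]_n :=
  \row_(k < n) rv_at c ((k + (n - l %% n)) %% n).

Definition quasi_cyclic (F : fieldType) (l m : nat) (C : {vspace 'rV[F]_(l * m)}) : Prop :=
  forall c : 'rV[F]_(l * m), c \in C -> qshift l c \in C.

Definition emod (k : int) (n : nat) : nat := `|(k %% n%:Z)%Z|%N.

(* Main.v *)
Require Import Defs.
From HB Require Import structures.
From mathcomp Require Import all_boot all_order all_algebra.
From mathcomp Require Import ring zify.
Import GRing.Theory Num.Theory.
Local Open Scope ring_scope.

Lemma modp_sum (F : fieldType) (I : Type) (r : seq I) (P : pred I)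
  (f : I -> {poly F}) (d : {poly F}) :
  (\sum_(i <- r | P i) f i) %% d = \sum_(i <- r | P i) (f i %% d).
Proof. exact: (big_morph (fun p => p %% d) (modpD d) (mod0p d)). Qed.

Lemma comp_sum (F : fieldType) (I : Type) (r : seq I) (P : pred I)
  (f : I -> {poly F}) (q : {poly F}) :
  (\sum_(i <- r | P i) f i) \Po q = \sum_(i <- r | P i) (f i \Po q).
Proof. exact: (big_morph (fun p => p \Po q) (fun x y => comp_polyD x y q) (comp_poly0 q)). Qed.

Lemma Xmod_aux (F : fieldType) (n q r : nat) :
  'X^(q * n + r) %% ('X^n - 1 : {poly F}) = 'X^r %% ('X^n - 1).
Proof.
elim: q => [|q IH]; first by rewrite mul0n add0n.
have -> : ('X^(q.+1 * n + r) : {poly F}) =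
   'X^(q * n + r) * ('X^n - 1) + 'X^(q * n + r).
  by rewrite mulrBr mulr1 subrK -exprD mulSn; congr (_ ^+ _); lia.
by rewrite modpD modp_mull add0r IH.
Qed.

Lemma Xmod (F : fieldType) (n k : nat) :
  'X^k %% ('X^n - 1 : {poly F}) = 'X^(k %% n) %% ('X^n - 1).
Proof. by rewrite {1}(divn_eq k n) Xmod_aux. Qed.

Lemma comp_mod (F : fieldType) (p e r : {poly F}) :
  ((p %% e) \Po r) %% (e \Po r) = (p \Po r) %% (e \Po r).
Proof.
by rewrite [in RHS](divp_eq p e) comp_polyD comp_polyM modpD modp_mull add0r.
Qed.

Lemma sum_split (V : nmodType) (p q : nat) (F : nat -> V) :
  \sum_(i < p * q) F i = \sum_(i < q) \sum_(g < p) F (i * p + g)%N.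
Proof.
rewrite -(big_mkord xpredT F).
elim: q => [|q IH]; first by rewrite muln0 big_ord0 big_geq.
rewrite mulnSr (big_cat_nat _ (leq_addr _ _)) //= IH big_ord_recr /=.
congr (_ + _).
rewrite -{1}(add0n (p * q)%N) big_addn addKn big_mkord.
by apply: eq_bigr => i _; rewrite addnC mulnC.
Qed.


Lemma expo (lA mA lB mB i j g h : nat) (a b : int) :
  (0 < lA)%N -> (0 < mA)%N -> (0 < lB)%N -> (0 < mB)%N ->
  a * (lA * mA)%:Z + b * (lB * mB)%:Z = 1 ->
  (((lA * lB) * emod (g%:Z * (- (b * mB%:Z)) + h%:Z * (- (a * mA%:Z))) (mA * mB)
   + (lA * lB) * emod (i%:Z * a * (lA * mA)%:Z + j%:Z * b * (lB * mB)%:Z) (mA * mB)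
   + (g * lA + h * lB)) %% ((lA * mA) * (lB * mB)))%N
  = emod ((i * lB + g)%:Z * a * (lA * mA)%:Z * lA%:Z
          + (j * lA + h)%:Z * b * (lB * mB)%:Z * lB%:Z) ((lA * mA) * (lB * mB)).
Proof.
move=> pA qA pB qB H.
have m0 : (mA * mB)%:Z != 0 by rewrite eqz_nat -lt0n muln_gt0 qA qB.
have n0 : ((lA * mA) * (lB * mB))%:Z != 0.
  by rewrite eqz_nat -lt0n !muln_gt0 pA qA pB qB.
rewrite /emod.
set T := (_ + _ * - (a * _)).
set C := (i%:Z * _ * _ + _).
set Z := (_ + (j * lA + h)%:Z * _ * _ * _).
apply/eqP; rewrite -eqz_nat; apply/eqP.
rewrite -modz_nat !PoszD !PoszM !gez0_abs ?modz_ge0 //.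
apply/eqP; rewrite eqz_mod_dvd.
have eT : (T %% (mA * mB)%:Z)%Z = T - (T %/ (mA * mB)%:Z)%Z * (mA * mB)%:Z.
  by rewrite {2}(divz_eq T (mA * mB)%:Z) addrC addKr.
have eC : (C %% (mA * mB)%:Z)%Z = C - (C %/ (mA * mB)%:Z)%Z * (mA * mB)%:Z.
  by rewrite {2}(divz_eq C (mA * mB)%:Z) addrC addKr.
rewrite eT eC.
set tq := (T %/ _)%Z; set cq := (C %/ _)%Z.
rewrite !PoszM in H *.
rewrite /T /C /Z !PoszD !PoszM.
have E : forall X Y d : int, X = Y -> (d %| Y)%Z -> (d %| X)%Z by move=> ? ? ? ->.
apply: (E _ ((- (tq + cq)) * ((lA * mA)%:Z * ((lB * mB)%:Z))
     + (g%:Z * lA%:Z + h%:Z * lB%:Z) * (1 - (a * (lA%:Z * mA%:Z) + b * (lB%:Z * mB%:Z))))).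
  by ring.
rewrite H subrr mulr0 addr0.
by apply: dvdz_mull; exact: dvdzz.
Qed.

Theorem lemma4 (F : finFieldType) (lA mA lB mB : nat)
    (A : {vspace 'rV[F]_(lA * mA)}) (B : {vspace 'rV[F]_(lB * mB)})
    (a b : int) (M : 'M[F]_(lB * mB, lA * mA)) :
  (0 < lA)%N -> (0 < mA)%N -> (0 < lB)%N -> (0 < mB)%N ->
  quasi_cyclic A -> quasi_cyclic B ->
  coprime (lA * mA) (lB * mB) ->
  a * (lA * mA)%:Z + b * (lB * mB)%:Z = 1 ->
  (forall i, row i M \in A) ->
  (forall j, (col j M)^T \in B) ->
  let nA := (lA * mA)%N in
  let nB := (lB * mB)%N in
  let m := (mA * mB)%N in
  let n := (nA * nB)%N in
  let psi (i j : nat) : nat :=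
    emod (i%:Z * a * nA%:Z * lA%:Z + j%:Z * b * nB%:Z * lB%:Z) n in
  let theta (g h : nat) : nat :=
    emod (g%:Z * (- (b * mB%:Z)) + h%:Z * (- (a * mA%:Z))) m in
  let chi (i j : nat) : nat :=
    emod (i%:Z * a * nA%:Z + j%:Z * b * nB%:Z) m in
  let c : {poly F} :=
    \sum_(i < nB) \sum_(j < nA) M i j *: 'X^(psi i j) in
  let cgh (g h : nat) : {poly F} :=
    ('X^(theta g h) *
      \sum_(i < mB) \sum_(j < mA)
         mx_at M (i * lB + g)%N (j * lA + h)%N *: 'X^(chi i j))
    %% ('X^m - 1) in
  c %% ('X^n - 1) =
  (\sum_(g < lB) \sum_(h < lA)
      (cgh g h \Po 'X^(lA * lB)) * 'X^(g * lA + h * lB)) %% ('X^n - 1).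

Proof.
move=> pA qA pB qB _ _ _ H _ _ nA nB m n psi theta chi c cgh.
set d := 'X^n - 1.
have ed : ('X^m - 1) \Po 'X^(lA * lB) = d.
  rewrite comp_polyB comp_Xn_poly -exprM (comp_poly_multiplicative _).2 /d /n /nA /nB /m.
  congr ('X^_ - 1); lia.
have RH : forall g h : nat,
  ((cgh g h \Po 'X^(lA * lB)) * 'X^(g * lA + h * lB)) %% d =
  (\sum_(i < mB) \sum_(j < mA) mx_at M (i * lB + g)%N (j * lA + h)%N
       *: 'X^(psi (i * lB + g)%N (j * lA + h)%N)) %% d.
  move=> g h.
  rewrite /cgh mulrC -modp_mul -ed comp_mod ed modp_mul mulrC.
  rewrite comp_polyM comp_Xn_poly -exprM comp_sum mulr_sumr mulr_suml !modp_sum.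
  apply: eq_bigr => i _.
  rewrite comp_sum mulr_sumr mulr_suml !modp_sum.
  apply: eq_bigr => j _.
  rewrite comp_polyZ comp_Xn_poly -exprM -scalerAr -scalerAl !modpZl -!exprD Xmod.
  congr (_ *: ('X^_ %% _)).
  rewrite /theta /chi /psi /nA /nB /m /n.
  exact: expo.
rewrite [RHS]modp_sum.
under eq_bigr => g _ do rewrite modp_sum.
under eq_bigr => g _ do under eq_bigr => h _ do rewrite RH.
under eq_bigr => g _ do rewrite -modp_sum.
rewrite -modp_sum; congr (_ %% _).
rewrite /c.
have -> : \sum_(i < nB) \sum_(j < nA) M i j *: 'X^(psi i j) =
  \sum_(i < lB * mB) \sum_(j < lA * mA) mx_at M i j *: 'X^(psi i j).
  apply: eq_bigr => i _; apply: eq_bigr => j _.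
  by rewrite /mx_at !valK.
rewrite (@sum_split _ lB mB (fun i => \sum_(j < lA * mA) mx_at M i j *: 'X^(psi i j))).
under eq_bigr => i _ do under eq_bigr => g _ do
  rewrite (@sum_split _ lA mA (fun j => mx_at M (i * lB + g)%N j *: 'X^(psi (i * lB + g)%N j))).
under eq_bigr => i _ do under eq_bigr => g _ do rewrite exchange_big.
rewrite exchange_big.
apply: eq_bigr => g _.
exact: exchange_big.
Qed.
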